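(* Let $k\in\mathbb{R}_{\ge0}$, $(A,B,C)$ a $k$-initial triple, $(a,b,c)$ a $0$-initial triple, and $\mathbf{w}=[w_1,w_2,\dots]$ an infinite reduced sequence in which each of $1,2,3$ appears infinitely many times. For $j\ge0$ let $(X_j,Y_j,Z_j)=\mathcal{M}_k^{\mathbf{w}_j}(A,B,C)$, $(x_j,y_j,z_j)=\mathcal{M}^{\mathbf{w}_j}(a,b,c)$ and $(l_j,m_j,n_j)=(X_j/x_j,Y_j/y_j,Z_j/z_j)$. Then the sequence $\{\max(l_j,m_j,n_j)\}_{j\ge1}$ is bounded above.
   Context: For $k\in\mathbb{R}_{\ge0}$: $\mathcal{M}_{1;k}(X,Y,Z)=(k+Y+Z,Y,Z)$, $\mathcal{M}_{2;k}(X,Y,Z)=(X,k+X+Z,Z)$, $\mathcal{M}_{3;k}(X,Y,Z)=(X,Y,k+X+Y)$ on $\mathbb{R}_+^3$, $\mathcal{M}_i=\mathcal{M}_{i;0}$. A $k$-initial triple is $(A,B,C)\in\mathbb{R}_+^3$ with $A\ne B+C+k$, $B\ne A+C+k$, $C\ne A+B+k$. A sequence with entries in $\{1,2,3\}$ is reduced if consecutive entries differ; $\mathbf{w}_j=[w_1,\dots,w_j]$ ($\mathbf{w}_0$ empty), $\mathcal{M}_k^{\mathbf{w}_j}=\mathcal{M}_{w_j;k}\circ\cdots\circ\mathcal{M}_{w_1;k}$, $\mathcal{M}^{\mathbf{w}_j}=\mathcal{M}_0^{\mathbf{w}_j}$. *)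

(* Defs.v *)
From Stdlib Require Import Reals.
Open Scope R_scope.

(* The maps M_{i;k} on triples. Indices other than 1,2 are treated as 3;
   the statement only uses sequences with entries in {1,2,3}. *)
Definition Mk (k : R) (i : nat) (t : R * R * R) : R * R * R :=
  let '(X, Y, Z) := t in
  match i with
  | 1%nat => (k + Y + Z, Y, Z)
  | 2%nat => (X, k + X + Z, Z)
  | _ => (X, Y, k + X + Y)
  end.

Definition pos_triple (t : R * R * R) : Prop :=
  let '(X, Y, Z) := t in 0 < X /\ 0 < Y /\ 0 < Z.

Definition k_initial (k : R) (t : R * R * R) : Prop :=
  pos_triple t /\
  let '(A, B, C) := t in
  A <> B + C + k /\ B <> A + C + k /\ C <> A + B + k.

(* w : nat -> nat, with w n the entry w_{n+1}. *)
Definition reduced_seq (w : nat -> nat) : Prop :=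
  (forall n, (w n = 1 \/ w n = 2 \/ w n = 3)%nat) /\
  (forall n, w n <> w (S n)).

Definition appears_inf_often (w : nat -> nat) (i : nat) : Prop :=
  forall N, exists n, (N <= n)%nat /\ w n = i.

Fixpoint Mk_iter (k : R) (w : nat -> nat) (j : nat) (t : R * R * R) : R * R * R :=
  match j with
  | O => t
  | S j' => Mk k (w j') (Mk_iter k w j' t)
  end.

Definition max3 (a b c : R) : R := Rmax a (Rmax b c).

(* Main.v *)
Require Import Defs.
From Stdlib Require Import Reals Lra Psatz.
Open Scope R_scope.

Definition Inv (k U : R) (t s : R * R * R) : Prop :=
  let '(X, Y, Z) := t in
  let '(x, y, z) := s in
  0 < x /\ 0 < y /\ 0 < z /\ X + k <= U * x /\ Y + k <= U * y /\ Z + k <= U * z.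

Lemma inv_step k U i t s : Inv k U t s -> Inv k U (Mk k i t) (Mk 0 i s).
Proof.
  destruct t as [[X Y] Z]; destruct s as [[x y] z]; unfold Inv, Mk.
  intros (?&?&?&?&?&?).
  destruct i as [|[|[|]]]; repeat split; nra.
Qed.

Lemma inv_iter k U w t s j : Inv k U t s -> Inv k U (Mk_iter k w j t) (Mk_iter 0 w j s).
Proof.
  intro H; induction j; simpl; [exact H | apply inv_step; exact IHj].
Qed.

Theorem proposition5p3 (k : R) (A B C a b c : R) (w : nat -> nat) :
  0 <= k ->
  k_initial k (A, B, C) ->
  k_initial 0 (a, b, c) ->
  reduced_seq w ->
  appears_inf_often w 1%nat ->
  appears_inf_often w 2%nat ->
  appears_inf_often w 3%nat ->
  exists U : R, forall j : nat, (1 <= j)%nat ->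
    let '(X, Y, Z) := Mk_iter k w j (A, B, C) in
    let '(x, y, z) := Mk_iter 0 w j (a, b, c) in
    max3 (X / x) (Y / y) (Z / z) <= U.
Proof.
  intros Hk [[HA [HB HC]] _] [[Ha [Hb Hc]] _] _ _ _ _.
  set (U := max3 ((A + k) / a) ((B + k) / b) ((C + k) / c)).
  exists U. intros j _.
  assert (H0 : Inv k U (A, B, C) (a, b, c)).
  { unfold Inv, U, max3.
    assert (E1 : (A + k) / a <= Rmax ((A + k) / a) (Rmax ((B + k) / b) ((C + k) / c)))
      by apply Rmax_l.
    assert (E2 : (B + k) / b <= Rmax ((A + k) / a) (Rmax ((B + k) / b) ((C + k) / c)))
      by (eapply Rle_trans; [apply Rmax_l | apply Rmax_r]).
    assert (E3 : (C + k) / c <= Rmax ((A + k) / a) (Rmax ((B + k) / b) ((C + k) / c)))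
      by (eapply Rle_trans; [apply Rmax_r | apply Rmax_r]).
    set (M := Rmax _ _) in *.
    repeat split; try lra.
    - apply Rmult_le_reg_r with (/ a); [apply Rinv_0_lt_compat; lra|].
      rewrite Rmult_assoc, Rinv_r by lra. lra.
    - apply Rmult_le_reg_r with (/ b); [apply Rinv_0_lt_compat; lra|].
      rewrite Rmult_assoc, Rinv_r by lra. lra.
    - apply Rmult_le_reg_r with (/ c); [apply Rinv_0_lt_compat; lra|].
      rewrite Rmult_assoc, Rinv_r by lra. lra. }
  pose proof (inv_iter k U w _ _ j H0) as H.
  destruct (Mk_iter k w j (A, B, C)) as [[X Y] Z].
  destruct (Mk_iter 0 w j (a, b, c)) as [[x y] z].
  destruct H as (Hx&Hy&Hz&H1&H2&H3).
  assert (D : forall P p, 0 < p -> P + k <= U * p -> P / p <= U).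
  { intros P p Hp HP. apply Rmult_le_reg_r with p; [lra|].
    unfold Rdiv. rewrite Rmult_assoc, Rinv_l by lra. lra. }
  unfold max3.
  apply Rmax_lub; [apply D; auto|].
  apply Rmax_lub; apply D; auto.
Qed.
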